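(* In the Rustichini setting, let $F\in\mathcal F$ and $x,y\in\operatorname{ri}(F)$. Then $\mathcal N(x)=\mathcal N(y)$.
   Context: Rustichini setting: a $k$-action partial monitoring game with finite latent space $\mathcal Z$, loss $\mathcal L:[k]\times\mathcal Z\to[0,1]$, signal $\mathcal S:[k]\times\mathcal Z\to\Sigma$; $\mathcal K$ = probability simplex on $\mathcal Z$; $\Delta_k$ = probability simplex on $[k]$; $\mathcal L(\pi,x)=\sum_a\sum_z\pi(a)x(z)\mathcal L(a,z)$; $\mathcal S(a,x)$ = law of $\mathcal S(a,z)$, $z\sim x$; $x\,\mathrm R\,y$ iff $\mathcal S(a,x)=\mathcal S(a,y)$ for all $a$; $\mathcal V(\pi,x)=\sup_{y\,\mathrm R\,x}\mathcal L(\pi,y)$; $\mathcal V_\star(x)=\min_{\pi\in\Delta_k}\mathcal V(\pi,x)$; $\Delta(\pi,x)=\mathcal V(\pi,x)-\mathcal V_\star(x)$. $\mathcal V_\star$ is concave piecewise linear and $m$ is the smallest integer with $\mathcal V_\star(x)=\min_{\alpha\in[m]}\mathcal V^m(x)_\alpha$ for some linear $\mathcal V^m:\mathcal K\to\mathbb R^m$. For $\alpha\in[m]$ the cell is the polytope $P_\alpha=\{x\in\mathcal K:\mathcal V_\star(x)=\mathcal V^m(x)_\alpha\}$, and $\mathcal F=\bigcup_{\alpha\in[m]}\operatorname{faces}(P_\alpha)$ (faces include the polytope itself and $\emptyset$). $\mathcal N(x)=\{\pi\in\Delta_k:\Delta(\pi,x)=0\}$. $\operatorname{ri}$ denotes relative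 interior. *)

(* Defs.v *)
From HB Require Import structures.
From mathcomp Require Import all_boot all_order all_algebra.
From mathcomp Require Import boolp classical_sets reals.
Import Order.TTheory GRing.Theory Num.Theory.
Local Open Scope ring_scope.
Local Open Scope classical_set_scope.

Section Rustichini.
Context {R : realType} {Z : finType} {k : nat} {Sig : eqType}.

Definition simplexZ : set (Z -> R) :=
  [set x | (forall z, 0 <= x z) /\ \sum_z x z = 1].

Definition simplexA : set ('I_k -> R) :=
  [set p | (forall a, 0 <= p a) /\ \sum_a p a = 1].

Definition dotZ (w x : Z -> R) : R := \sum_z w z * x z.

(* faces of a polytope P: intersections of P with a supporting hyperplane
   {x | <w,x> = b} where <w,.> <= b on P.  (w = 0, b = 0 gives P itself;
   w = 0, b = 1 gives the empty face.) *)
Definition faces (P : set (Z -> R)) : set (set (Z -> R)) :=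
  [set F | exists (w : Z -> R) (b : R),
     (forall x, P x -> dotZ w x <= b) /\ F = [set x | P x /\ dotZ w x = b]].

Definition aff (F : set (Z -> R)) : set (Z -> R) :=
  [set x | exists (n : nat) (p : 'I_n -> Z -> R) (l : 'I_n -> R),
     (forall i, F (p i)) /\ (\sum_i l i = 1) /\
     x = (fun z => \sum_i l i * p i z)].

Definition ri (F : set (Z -> R)) : set (Z -> R) :=
  [set x | F x /\ exists2 e : R, 0 < e &
     forall y, aff F y -> (forall z, `|y z - x z| < e) -> F y].

Variables (L : 'I_k -> Z -> R) (S : 'I_k -> Z -> Sig).

Definition lossP (pi : 'I_k -> R) (x : Z -> R) : R :=
  \sum_a \sum_z pi a * x z * L a z.

Definition sigLaw (a : 'I_k) (x : Z -> R) : Sig -> R :=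
  fun s => \sum_(z | S a z == s) x z.

Definition Rrel (x y : Z -> R) : Prop := forall a, sigLaw a x = sigLaw a y.

Definition Vf (pi : 'I_k -> R) (x : Z -> R) : R :=
  sup [set lossP pi y | y in [set y | simplexZ y /\ Rrel y x]].

(* V_*(x) = min_{pi in Delta_k} V(pi, x) (written as an infimum; it is attained) *)
Definition Vstar (x : Z -> R) : R := inf [set Vf pi x | pi in simplexA].

Definition gap (pi : 'I_k -> R) (x : Z -> R) : R := Vf pi x - Vstar x.

Definition Nset (x : Z -> R) : set ('I_k -> R) :=
  [set pi | simplexA pi /\ gap pi x = 0].

(* coordinate alpha of the linear map V^m : x |-> (sum_z c alpha z * x z)_alpha *)
Definition linV {m : nat} (c : 'I_m -> Z -> R) (alpha : 'I_m) (x : Z -> R) : R :=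
  \sum_z c alpha z * x z.

Definition represents {m : nat} (c : 'I_m -> Z -> R) : Prop :=
  forall x, simplexZ x ->
    (exists alpha, Vstar x = linV c alpha x) /\
    (forall alpha, Vstar x <= linV c alpha x).

Definition minimal_pieces (m : nat) : Prop :=
  (exists c : 'I_m -> Z -> R, represents c) /\
  (forall m' (c' : 'I_m' -> Z -> R), represents c' -> (m <= m')%N).

Definition cell {m : nat} (c : 'I_m -> Z -> R) (alpha : 'I_m) : set (Z -> R) :=
  [set x | simplexZ x /\ Vstar x = linV c alpha x].

Definition face_family {m : nat} (c : 'I_m -> Z -> R) : set (set (Z -> R)) :=
  [set F | exists alpha, faces (cell c alpha) F].
End Rustichini.

(* Main.v *)
Require Import Defs.
From HB Require Import structures.
From mathcomp Require Import all_boot all_order all_algebra.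
From mathcomp Require Import boolp classical_sets reals.
From mathcomp Require Import ring lra.
Import Order.TTheory GRing.Theory Num.Theory.
Local Open Scope ring_scope.
Local Open Scope classical_set_scope.

Set Implicit Arguments.
Section Aux.
Context {R : realType} {Z : finType} {k : nat} {Sig : eqType}.
Variables (L : 'I_k -> Z -> R) (S : 'I_k -> Z -> Sig).
Hypothesis hL : forall a z, 0 <= L a z <= 1.

Definition mix (mu : R) (f g : Z -> R) : Z -> R := fun z => mu * f z + (1 - mu) * g z.

Lemma sum_mix (P : pred Z) mu f g :
  \sum_(z | P z) mix mu f g z = mu * \sum_(z | P z) f z + (1 - mu) * \sum_(z | P z) g z.
Proof. by rewrite /mix big_split /= -!mulr_sumr. Qed.

Lemma simplex_mix mu f g : 0 <= mu <= 1 -> simplexZ f -> simplexZ g ->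
  simplexZ (mix mu f g).
Proof.
move=> /andP[m0 m1] [f0 f1] [g0 g1]; split.
  move=> z; rewrite /mix addr_ge0 // mulr_ge0 // subr_ge0 //.
rewrite (sum_mix xpredT) f1 g1; ring.
Qed.

Lemma Rrel_mix mu f g f' g' : Rrel S f f' -> Rrel S g g' ->
  Rrel S (mix mu f g) (mix mu f' g').
Proof.
move=> hf hg a; apply/funext => s; rewrite /sigLaw.
by rewrite (sum_mix (fun z => S a z == s)) (sum_mix (fun z => S a z == s)) -!/(sigLaw S a _ s) hf hg.
Qed.

Lemma lossP_mix pi mu f g :
  lossP L pi (mix mu f g) = mu * lossP L pi f + (1 - mu) * lossP L pi g.
Proof.
rewrite /lossP !mulr_sumr -big_split /=; apply: eq_bigr => a _.
rewrite !mulr_sumr -big_split /=; apply: eq_bigr => z _.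
rewrite /mix; ring.
Qed.

Lemma linV_mix m (c : 'I_m -> Z -> R) al mu f g :
  linV c al (mix mu f g) = mu * linV c al f + (1 - mu) * linV c al g.
Proof.
rewrite /linV !mulr_sumr -big_split /=; apply: eq_bigr => z _.
rewrite /mix; ring.
Qed.

Lemma lossP_bnd pi y : simplexA pi -> simplexZ y -> 0 <= lossP L pi y <= 1.
Proof.
move=> [p0 p1] [y0 y1]; apply/andP; split.
  apply: sumr_ge0 => a _; apply: sumr_ge0 => z _.
  by rewrite !mulr_ge0 //; case/andP: (hL a z).
apply: (@le_trans _ _ (\sum_a \sum_z pi a * y z)).
  apply: ler_sum => a _; apply: ler_sum => z _.
  by apply: ler_piMr; [rewrite mulr_ge0|case/andP: (hL a z)].
rewrite (eq_bigr (fun a => pi a)) ?p1 // => a _.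
by rewrite -mulr_sumr y1 mulr1.
Qed.

Lemma Vf_ge pi w y : simplexA pi -> simplexZ y -> Rrel S y w ->
  lossP L pi y <= Vf L S pi w.
Proof.
move=> hp hy hr; apply: ub_le_sup; last by exists y.
exists 1 => r [y' [hy' _] <-]; by case/andP: (lossP_bnd hp hy').
Qed.

Lemma Vf_le pi w M : simplexZ w ->
  (forall y, simplexZ y -> Rrel S y w -> lossP L pi y <= M) -> Vf L S pi w <= M.
Proof.
move=> hw h; apply: ge_sup; first by exists (lossP L pi w), w.
by move=> r [y [hy hr] <-]; apply: h.
Qed.

Lemma Vf_ge0 pi w : simplexA pi -> simplexZ w -> 0 <= Vf L S pi w.
Proof.
move=> hp hw; apply: le_trans (Vf_ge hp hw (fun _ => erefl)).
by case/andP: (lossP_bnd hp hw).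
Qed.

Lemma Vstar_le pi w : simplexA pi -> simplexZ w -> Vstar L S w <= Vf L S pi w.
Proof.
move=> hp hw; apply: ge_inf; last by exists pi.
exists 0 => r [p hp' <-]; exact: Vf_ge0.
Qed.

Lemma Vf_concave pi mu f g : 0 < mu < 1 -> simplexA pi -> simplexZ f -> simplexZ g ->
  mu * Vf L S pi f + (1 - mu) * Vf L S pi g <= Vf L S pi (mix mu f g).
Proof.
move=> /andP[m0 m1] hp hf hg.
have m1' : 0 < 1 - mu by rewrite subr_gt0.
have key : forall y1 y2, simplexZ y1 -> Rrel S y1 f -> simplexZ y2 -> Rrel S y2 g ->
  mu * lossP L pi y1 + (1 - mu) * lossP L pi y2 <= Vf L S pi (mix mu f g).
  move=> y1 y2 h1 r1 h2 r2; rewrite -lossP_mix; apply: Vf_ge => //.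
    by apply: simplex_mix => //; rewrite ltW // ltW.
  exact: Rrel_mix.
have step : forall y2, simplexZ y2 -> Rrel S y2 g ->
  mu * Vf L S pi f + (1 - mu) * lossP L pi y2 <= Vf L S pi (mix mu f g).
  move=> y2 h2 r2; rewrite -lerBrDr -ler_pdivlMl //.
  apply: Vf_le => // y1 h1 r1; rewrite ler_pdivlMl // lerBrDr; exact: key.
rewrite addrC -lerBrDr -ler_pdivlMl //.
apply: Vf_le => // y2 h2 r2; rewrite ler_pdivlMl // lerBrDr addrC; exact: step.
Qed.

End Aux.

Lemma N_sub (R : realType) (Z : finType) (k : nat) (Sig : eqType)
  (L : 'I_k -> Z -> R) (S : 'I_k -> Z -> Sig)
  (hL : forall a z, 0 <= L a z <= 1)
  (m : nat) (c : 'I_m -> Z -> R) al (F : set (Z -> R))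
  (hFc : F `<=` cell L S c al) (x y : Z -> R) (hx : ri F x) (hy : F y) pi :
  Nset L S x pi -> Nset L S y pi.
Proof.
move=> [hp hg]; split => //.
case: hx => Fx [e e0 he].
pose M := \sum_z `|x z - y z|.
have M0 : 0 <= M by apply: sumr_ge0 => z _.
have hM : forall z, `|x z - y z| <= M.
  by move=> z; rewrite /M (bigD1 z) //= lerDl sumr_ge0.
pose t := e / (2 * (M + 1)).
have M1 : 0 < M + 1 by rewrite ltr_pwDr.
have t0 : 0 < t by rewrite divr_gt0 // mulr_gt0.
pose zz := fun z => x z + t * (x z - y z).
have Fz : F zz.
  apply: he.
    exists 2%N, (fun i : 'I_2 => if i == ord0 then x else y),
      (fun i : 'I_2 => if i == ord0 then 1 + t else - t).
    split; first by move=> i; case: (i == ord0).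
    split; first by rewrite !big_ord_recl big_ord0 /=; ring.
    apply/funext => z; rewrite !big_ord_recl big_ord0 /= /zz; ring.
  move=> z; rewrite /zz addrC addKr normrM gtr0_norm //.
  apply: (@le_lt_trans _ _ (t * (M + 1))).
    by rewrite ler_pM2l // (le_trans (hM z)) // lerDl.
  have -> : t * (M + 1) = e / 2 by rewrite /t; by field; rewrite gt_eqF.
  by rewrite ltr_pdivrMr // ltr_pMr // ltr1n.
pose mu := (1 + t)^-1.
have t1 : 0 < 1 + t by rewrite addr_gt0.
have mu0 : 0 < mu by rewrite invr_gt0.
have mu1 : mu < 1 by rewrite invf_lt1 // ltrDl.
have xe : x = mix mu zz y.
  apply/funext => z; rewrite /mix /mu /zz; by field; rewrite gt_eqF.
have [sz ez] := hFc _ Fz.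
have [sy ey] := hFc _ hy.
have [sx ex] := hFc _ Fx.
have hcv := @Vf_concave R Z k Sig L S hL pi mu zz y.
have {hcv} hcv := hcv ltac:(by rewrite mu0 mu1) hp sz sy.
rewrite -xe in hcv.
have lz := @Vstar_le R Z k Sig L S hL pi zz hp sz.
have ly := @Vstar_le R Z k Sig L S hL pi y hp sy.
move: hg; rewrite /gap => /eqP; rewrite subr_eq0 => /eqP hg.
rewrite hg ex xe linV_mix -ez -ey in hcv.
rewrite /gap; apply/eqP; rewrite subr_eq0 eq_le ly andbT.
have h1 : 0 <= mu * (Vf L S pi zz - Vstar L S zz) by rewrite mulr_ge0 ?subr_ge0 // ltW.
have h2 : (1 - mu) * (Vf L S pi y - Vstar L S y) <= 0 by lra.
rewrite -subr_le0; move: h2; rewrite pmulr_rle0 // subr_gt0 //.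
Qed.

Theorem lemma5 (R : realType) (Z : finType) (k : nat) (Sig : eqType)
  (L : 'I_k -> Z -> R) (S : 'I_k -> Z -> Sig)
  (hL : forall a z, 0 <= L a z <= 1)
  (m : nat) (c : 'I_m -> Z -> R)
  (hm : minimal_pieces L S m)
  (hc : represents L S c)
  (F : set (Z -> R)) (hF : face_family L S c F)
  (x y : Z -> R) (hx : ri F x) (hy : ri F y) :
  Nset L S x = Nset L S y.
Proof.
case: hF => al [w [b [_ hFe]]]; subst F.
have hFc : [set x | cell L S c al x /\ dotZ w x = b] `<=` cell L S c al by move=> ? [].
apply/seteqP; split => pi.
  move=> Hp; case: (hy) => Fy _; exact: (N_sub hL hFc y hx Fy Hp).
move=> Hp; case: (hx) => Fx _; exact: (N_sub hL hFc x hy Fx Hp).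
Qed.
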